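(* Let $p$ be a prime, let $i>j\ge1$ be integers with $i$ coprime to $p$, let $u=t+u_it^{pi+1}$ and let $v=t+v_{pj}t^{pj}+\dots\in S$ (i.e. $v\equiv t+v_{pj}t^{pj}\pmod{t^{pj+1}}$), where $u_i,v_{pj}\in\mathbb F_p$ and $u_iv_{pj}\neq0$. Write $[v,u]=t+\sum_{k\ge2}\alpha_kt^k$. Then the smallest $k\equiv1\pmod p$ with $\alpha_k\neq0$ is $k=p(pj+i-1)+1$, and $\alpha_{p(pj+i-1)+1}=-i\,u_iv_{pj}$.
   Context: $S$ denotes the group, under substitution $(f\circ g)(t)=f(g(t))$, of all power series $t+\sum_{k\ge1}(a_{pk}t^{pk}+a_{pk+1}t^{pk+1})$ with coefficients in $\mathbb F_p$. The commutator is $[v,u]=v\circ u\circ v^{-1}\circ u^{-1}$. *)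

(* Defs.v *)
From HB Require Import structures.
From mathcomp Require Import all_boot all_order all_algebra.
Set Implicit Arguments. Unset Strict Implicit. Unset Printing Implicit Defensive.
Import GRing.Theory.
Local Open Scope ring_scope.

(* Formal power series over F_p, represented by their coefficient sequences:
   s k is the coefficient of t^k. *)
Definition ser (p : nat) := nat -> 'F_p.

Definition strunc (p : nat) (g : ser p) (n : nat) : {poly 'F_p} :=
  \poly_(m < n.+1) g m.

(* substitution (f o g)(t) = f(g(t)), for g with zero constant term:
   [t^n] f(g) = sum_{k <= n} f_k [t^n] g^k *)
Definition scomp (p : nat) (f g : ser p) : ser p :=
  fun n => \sum_(k < n.+1) f k * (strunc g n ^+ k)`_n.

Definition sid (p : nat) : ser p := fun k => (k == 1%N)%:R.

Definition inS (p : nat) (f : ser p) : Prop :=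
  f 0%N = 0 /\ f 1%N = 1 /\
  forall k, (2 <= k)%N -> f k != 0 ->
    (p <= k)%N /\ (k %% p == 0)%N || (k %% p == 1)%N.

Definition scomm (p : nat) (v u vinv uinv : ser p) : ser p :=
  scomp v (scomp u (scomp vinv uinv)).

(* Main.v *)
Require Import Defs.
From HB Require Import structures.
From mathcomp Require Import all_boot all_order all_algebra all_field zify ring.
Import GRing.Theory.
Set Implicit Arguments. Unset Strict Implicit.

Lemma ar1 p i j e : (1 < p)%N -> (0 < j)%N -> (j < i)%N -> (j <= e)%N ->
  ((p * (p * j + i - 1)).+1 <= p * (p * i).+1 + p * e.-1)%N.
Proof.
move=> p1 j0 ji je.
have [d ->] : exists d, i = (j + d).+1 by exists (i - j.+1); lia.
have [f ->] : exists f, e = j + f by exists (e - j); lia.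
have [q ->] : exists q, p = q.+2 by exists (p - 2); lia.
have [j' ->] : exists j', j = j'.+1 by exists (j - 1); lia.
nia.
Qed.
Lemma ar3 p i a b : (a + b = i.-1)%N -> (0 < i)%N -> (p * i <= 2 * p + p * a.-1 + p * b)%N.
Proof. move=> *; nia. Qed.
Lemma ar4 p i a b : (a + b = i.-1)%N -> (0 < i)%N -> (p * i <= p * a + (2 * p + p * b.-1))%N.
Proof. move=> *; nia. Qed.
Lemma ar5 p i j : (0 < i)%N -> (0 < j)%N -> ((p * (p * j + i - 1)).+1.-1 = p * j * p + p * i.-1)%N.
Proof.
move=> i0 j0; have [d ->] : exists d, i = d.+1 by exists (i - 1); lia.
rewrite /= addnS subn1 /=; nia.
Qed.
Lemma ar6 p i j : (0 < p)%N -> (0 < i)%N -> ((p * (p * j + i - 1)).+1 <= (p * j).+1 * p + p * i.-1)%N.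
Proof.
move=> p0 i0; have [d ->] : exists d, i = d.+1 by exists (i - 1); lia.
rewrite /= addnS subn1 /=; nia.
Qed.
Lemma ar7 p i j : (0 < p)%N -> (0 < i)%N -> ((p * (p * j + i - 1)).+1 <= p * j * p + p * i)%N.
Proof.
move=> p0 i0; have [d ->] : exists d, i = d.+1 by exists (i - 1); lia.
rewrite addnS subn1 /=; nia.
Qed.
Lemma ar8 p j e : (1 < p)%N -> (p * j <= p * e + 1)%N -> (j <= e)%N.
Proof. move=> *; nia. Qed.
Lemma ar9 p i : (1 < p)%N -> ((p * i).+1 %% p = 1)%N.
Proof. by move=> p1; rewrite -addn1 mulnC modnMDl modn_small. Qed.
Lemma ar10 p m : (1 < p)%N -> (m.+1 %% p == 1)%N -> (m %% p = 0)%N.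
Proof.
move=> p1; rewrite modnS; case: ifP => // _ /eqP [] //.
Qed.


Local Open Scope ring_scope.
Section Gen.
Variable F : fieldType.
Implicit Types a b c r : {poly F}.

Lemma dX_coef n r k : 'X^n %| r -> (k < n)%N -> r`_k = 0.
Proof.
rewrite dvdp_eq => /eqP -> kn; by rewrite coefMXn kn.
Qed.

Lemma coef_dX n r : (forall k, (k < n)%N -> r`_k = 0) -> 'X^n %| r.
Proof.
move=> H; rewrite -(poly_take_drop n r).
have -> : take_poly n r = 0.
  apply/polyP=> k; rewrite coef_take_poly coef0; case: ifP => // /H //.
by rewrite add0r dvdp_mull.
Qed.

Lemma dX_le m n r : (m <= n)%N -> 'X^n %| r -> 'X^m %| r.
Proof. by move=> mn; apply: dvdp_trans (dvdp_exp2l _ mn). Qed.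

Lemma dX_sum n (I : finType) (f : I -> {poly F}) :
  (forall i, 'X^n %| f i) -> 'X^n %| \sum_i f i.
Proof.
move=> H; apply: (big_ind (fun q => 'X^n %| q)).
- exact: dvdp0.
- by move=> x y; apply: dvdp_add.
- by move=> i _; apply: H.
Qed.

Lemma dX_mul m n a b : 'X^m %| a -> 'X^n %| b -> 'X^(m + n) %| a * b.
Proof. by move=> ha hb; rewrite exprD dvdp_mul. Qed.

Lemma dX_exp m a k : 'X^m %| a -> 'X^(m * k) %| a ^+ k.
Proof. by move=> h; rewrite exprM dvdp_exp2r. Qed.

Lemma subXX_dX m q a b k : 'X^m %| a - b -> 'X^q %| a -> 'X^q %| b ->
  'X^(m + q * k.-1) %| a ^+ k - b ^+ k.
Proof.
move=> hab ha hb; rewrite subrXX; apply: dX_mul => //.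
apply: dX_sum => i.
have -> : (q * k.-1 = q * (k.-1 - i) + q * i)%N.
  by rewrite -mulnDr subnK // -ltnS prednK // (leq_ltn_trans _ (ltn_ord i)).
by apply: dX_mul; apply: dX_exp.
Qed.

Lemma comp_dX1 n a b : 'X %| b -> 'X^n %| a -> 'X^n %| a \Po b.
Proof.
move=> hb; rewrite dvdp_eq => /eqP ->; rewrite comp_polyM comp_Xn_poly.
by apply: dvdp_mull; apply: dvdp_exp2r.
Qed.

Lemma comp_cg2 n a b b' : 'X^n %| b - b' -> 'X^n %| (a \Po b) - (a \Po b').
Proof.
move=> h.
have -> : (a \Po b) - (a \Po b') = \sum_(i < size a) a`_i *: (b ^+ i - b' ^+ i).
  rewrite !comp_polyE.
  rewrite [RHS](eq_bigr (fun i : 'I_(size a) => a`_i *: b ^+ i - a`_i *: b' ^+ i)).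
    by rewrite sumrB.
  by move=> i _; rewrite scalerBr.
apply: dX_sum => i.
rewrite -mul_polyC; apply: dvdp_mull.
by rewrite subrXX; apply: dvdp_mulr.
Qed.

Lemma comp_cg1 n a a' b : 'X %| b -> 'X^n %| a - a' -> 'X^n %| (a \Po b) - (a' \Po b).
Proof. by move=> hb h; rewrite -comp_polyB; apply: comp_dX1. Qed.

Lemma deriv_cg n a b : 'X^(n.+1) %| a - b -> 'X^n %| a^`() - b^`().
Proof.
move=> h; apply: coef_dX => k kn.
by rewrite -derivB coef_deriv (dX_coef h) ?mul0rn.
Qed.

Lemma dX0 r : ('X %| r) = (r`_0 == 0).
Proof.
have := dvdp_XsubCl r 0; rewrite subr0 => ->.
by rewrite /root horner_coef0.
Qed.

End Gen.

Lemma cancel_unit (F : fieldType) n (r s : {poly F}) :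
  r`_0 != 0 -> 'X^n %| r * s -> 'X^n %| s.
Proof.
move=> r0; have cp : coprimep ('X^n) r.
  apply: coprimep_expl; rewrite coprimep_sym coprimepX /root horner_coef0.
  exact: r0.
by rewrite (Gauss_dvdpr _ cp).
Qed.

Lemma Xdvd_comp (F : fieldType) (a b : {poly F}) :
  'X %| a -> 'X %| b -> 'X %| a \Po b.
Proof.
move=> ha hb; have := @comp_dX1 F 1 a b hb; rewrite expr1; exact.
Qed.

Lemma frobB p (pr : prime p) (a b : {poly 'F_p}) : (a - b) ^+ p = a ^+ p - b ^+ p.
Proof.
have chp : p \in [pchar {poly 'F_p}] by rewrite pchar_poly pchar_Fp.
by rewrite -!(pFrobenius_autE chp) pFrobenius_autB_comm //; exact: mulrC.
Qed.

Lemma fermatC p (pr : prime p) (c : 'F_p) : c%:P ^+ p = c%:P.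
Proof.
by rewrite -rmorphXn /=; have := expf_card c; rewrite card_Fp // => ->.
Qed.

Lemma natFp p (pr : prime p) k : (k%:R : 'F_p) = ((k %% p)%N)%:R.
Proof. by rewrite Fp_nat_mod. Qed.

Lemma comp_diff (F : fieldType) (a b b' : {poly F}) :
  (a \Po b) - (a \Po b') = \sum_(i < size a) a`_i *: (b ^+ i - b' ^+ i).
Proof.
rewrite !comp_polyE.
rewrite [RHS](eq_bigr (fun i : 'I_(size a) => a`_i *: b ^+ i - a`_i *: b' ^+ i)).
  by rewrite sumrB.
by move=> i _; rewrite scalerBr.
Qed.


Section Ids.
Variable R : comNzRingType.
Implicit Types x y z w a g v s ic xi u : R.
Lemma I1 x y w : x - y = ((x + w) - y) - w. Proof. ring. Qed.
Lemma I2 z x y a : z - x = (y - x) + (a - y) - (a - z). Proof. ring. Qed.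
Lemma IG z y (c : R) x a w : z - y + c * x = (a - y) - (a - z - c * w) - c * (w - x).
Proof. ring. Qed.
Lemma IK g v x s ic xi : (g - v * x) * s + (ic * v) * (x * xi) = g * s - v * x * (s - ic * xi).
Proof. ring. Qed.
Lemma Ihb u z y ic v x : (1 + u * z) - (1 + u * y) - (- (ic * u * v)) * x = u * (z - y + (ic * v) * x).
Proof. ring. Qed.
Lemma IS (za yb xa xb : R) : za * yb - xa * xb = (za - xa) * yb + xa * (yb - xb).
Proof. ring. Qed.
Lemma IV2 v x (c : R) w : v - x = (v - x - c * w) + c * w. Proof. ring. Qed.
End Ids.


Lemma coef_comp_widen (F : fieldType) (a b : {poly F}) n k :
  (size a <= n)%N -> (a \Po b)`_k = \sum_(i < n) a`_i * (b ^+ i)`_k.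
Proof.
move=> sa; rewrite coef_comp_poly (big_ord_widen n (fun i => a`_i * (b ^+ i)`_k) sa).
rewrite big_mkcond; apply: eq_bigr => i _; case: ifP => // /negbT.
by rewrite -leqNgt => /(nth_default 0) ->; rewrite mul0r.
Qed.

Lemma bridge p (f g : ser p) N : g 0%N = 0 ->
  'X^(N.+1) %| strunc (scomp f g) N - (strunc f N \Po strunc g N).
Proof.
move=> g0; apply: coef_dX => k kN.
rewrite coefB /strunc coef_poly kN.
rewrite (coef_comp_widen _ _ (size_poly _ _)).
have Xg : 'X %| \poly_(m < N.+1) g m by rewrite dX0 coef_poly g0.
rewrite /scomp.
rewrite (big_ord_widen N.+1 (fun i => f i * (strunc g k ^+ i)`_k) kN).
rewrite big_mkcond /=; apply/eqP; rewrite subr_eq0; apply/eqP; apply: eq_bigr => i _.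
rewrite coef_poly (ltn_ord i).
case: ifP => ik.
  congr (_ * _); apply/eqP; rewrite -subr_eq0 -coefB.
  apply/eqP; apply: (dX_coef (n := k.+1)) => //.
  rewrite subrXX; apply: dvdp_mulr; apply: coef_dX => m mk.
  by rewrite coefB !coef_poly mk (leq_trans mk kN) subrr.
have Xg1 : 'X^1 %| \poly_(m < N.+1) g m by rewrite expr1.
have := dX_exp i Xg1; rewrite mul1n => /dX_coef ->; first by rewrite mulr0.
by rewrite ltnNge -ltnS ik.
Qed.


Lemma scomp0 p (f g : ser p) : scomp f g 0%N = f 0%N.
Proof. by rewrite /scomp big_ord1 expr0 coef1 mulr1. Qed.

Lemma strunc_sid p N : (0 < N)%N -> strunc (sid p) N = 'X.
Proof.
move=> N0; apply/polyP => k; rewrite /strunc coef_poly coefX /sid.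
case: ifP => // /negbT; rewrite -leqNgt => h.
by case: eqP => // k1; move: h; rewrite k1 ltnS leqn0 => /eqP N0'; move: N0; rewrite N0'.
Qed.

Lemma assembly_id (R : comNzRingType) (A B C E W Z Y K : R) :
  B * E * (W - 1 - K) = B * E * (W - A * (C * Z)) + A * C * E * (B * Z - Y)
     + A * C * (E * Y - 1) + C * (A - B) + B * (C - E - K) + K * B * (1 - E).
Proof. ring. Qed.

Unset Implicit Arguments.
Theorem lemma5p2 (p i j : nat) (ui vpj : 'F_p) (v vinv uinv : ser p) :
  prime p -> (j >= 1)%N -> (i > j)%N -> coprime i p ->
  ui != 0 -> vpj != 0 ->
  inS v ->
  (forall k, (k < p * j)%N -> v k = (k == 1%N)%:R) ->
  v (p * j)%N = vpj ->
  let u : ser p := fun k => if k == 1%N then 1 else if k == (p * i).+1 then ui else 0 in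
  (* vinv, uinv are the inverses of v, u under substitution *)
  vinv 0%N = 0 -> scomp v vinv = sid p ->
  uinv 0%N = 0 -> scomp u uinv = sid p ->
  let alpha := scomm v u vinv uinv in
  let N := (p * (p * j + i - 1)).+1 in
  (forall k, (2 <= k)%N -> (k < N)%N -> (k %% p == 1)%N -> alpha k = 0) /\
  alpha N = - (i%:R * ui * vpj).
Proof.
move=> pr j1 ij cip hui hvpj Sv vlow vpjE u vi0 Hv ui0 Hu alpha N.
have p2 : (1 < p)%N by exact: prime_gt1.
have hN : N = (p * (p * j + i - 1)).+1 by [].
pose V := strunc v N. pose U := strunc u N. pose Vi := strunc vinv N.
pose Y := strunc uinv N. pose Z := Vi \Po Y. pose W := strunc alpha N.
have XVi : 'X %| Vi by rewrite dX0 /Vi /strunc coef_poly vi0.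
have XY : 'X %| Y by rewrite dX0 /Y /strunc coef_poly ui0.
have XZ : 'X %| Z by apply: Xdvd_comp.
have N0 : (0 < N)%N by [].
have H1 : 'X^(N.+1) %| (V \Po Vi) - 'X.
  have := bridge v N vi0; rewrite Hv strunc_sid //.
  by rewrite -dvdpNr opprB.
have H2 : 'X^(N.+1) %| (U \Po Y) - 'X.
  have := bridge u N ui0; rewrite Hu strunc_sid //.
  by rewrite -dvdpNr opprB.
have u0 : u 0%N = 0 by [].
have H3 : 'X^(N.+1) %| W - (V \Po (U \Po Z)).
  pose s1 := scomp vinv uinv. pose s2 := scomp u s1.
  have s10 : s1 0%N = 0 by rewrite /s1 scomp0.
  have s20 : s2 0%N = 0 by rewrite /s2 scomp0.
  have e1 := bridge vinv N ui0.
  have e2 := bridge u N s10.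
  have e3 := bridge v N s20.
  have e2' : 'X^(N.+1) %| strunc s2 N - (U \Po Z).
    rewrite (_ : _ - _ = (strunc s2 N - (U \Po strunc s1 N)) + ((U \Po strunc s1 N) - (U \Po Z))); last by ring.
    by apply: dvdp_add => //; apply: comp_cg2.
  rewrite (_ : _ - _ = (W - (V \Po strunc s2 N)) + ((V \Po strunc s2 N) - (V \Po (U \Po Z)))); last by ring.
  by apply: dvdp_add => //; apply: comp_cg2.
have H1' : 'X^(N.+1) %| (V \Po Z) - Y.
  have := comp_cg1 XY H1; by rewrite comp_polyX -comp_polyA.
have D1 : 'X^N %| ((V^`() \Po Z) * Z^`()) - Y^`().
  by have := deriv_cg H1'; rewrite deriv_comp.
have D2 : 'X^N %| ((U^`() \Po Y) * Y^`()) - 1.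
  by have := deriv_cg H2; rewrite deriv_comp derivX.
have D3 : 'X^N %| W^`() - (V^`() \Po (U \Po Z)) * ((U^`() \Po Z) * Z^`()).
  by have := deriv_cg H3; rewrite !deriv_comp.
have i1 : (0 < i)%N by exact: leq_trans j1 (ltnW ij).
have pj1 : (0 < p * j)%N by rewrite muln_gt0 (prime_gt0 pr) j1.
have pi1 : (0 < p * i)%N by rewrite muln_gt0 (prime_gt0 pr) i1.
have piN : ((p * i).+1 <= N)%N.
  by rewrite hN ltnS leq_mul2l; apply/orP; right; rewrite addnC -addnBA // leq_addr.
have UE : U = 'X + ui *: 'X^((p * i).+1).
  apply/polyP => k; rewrite /U /strunc coef_poly coefD coefZ !coefXn coefX /u.
  case: ifP => kN.
    case: eqP => [->|k1].
      have -> : (1 == (p * i).+1)%N = false by rewrite eqSS eq_sym; apply: negbTE; rewrite -lt0n.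
      by rewrite mulr0 addr0.
    by case: eqP => [_|_]; rewrite ?mulr1 ?mulr0 add0r.
  have k1 : k != 1%N by apply/eqP => k1; move: kN; rewrite k1.
  have k2 : k != (p * i).+1 by apply/eqP => k2; move: kN; rewrite k2 ltnS piN.
  by rewrite (negbTE k1) (negbTE k2) mulr0 addr0.
pose c := - (i%:R * ui * vpj).
have pim := ar9 i p2.
have ud : U^`() = 1 + ui *: 'X^(p * i).
  by rewrite UE derivD derivX derivZ derivXn /= -scaler_nat (natFp pr) pim scale1r.
have UZ : U \Po Z = Z + ui *: Z ^+ (p * i).+1.
  by rewrite UE comp_polyD comp_polyX comp_polyZ comp_Xn_poly.
have XZ1 : 'X^1 %| Z by rewrite expr1.
have XA : 'X %| U \Po Z.
  rewrite UZ; apply: dvdp_add => //; rewrite -mul_polyC; apply: dvdp_mull.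
  by apply: dvdp_exp.
have XA1 : 'X^1 %| U \Po Z by rewrite expr1.
have ha : 'X^N %| (V^`() \Po (U \Po Z)) - (V^`() \Po Z).
  rewrite comp_diff; apply: dX_sum => m.
  case: (eqVneq (V^`())`_m 0) => [->|cm0]; first by rewrite scale0r dvdp0.
  rewrite -mul_polyC; apply: dvdp_mull.
  case: (posnP m) => [->|m0]; first by rewrite !expr0 subrr dvdp0.
  move: cm0; rewrite coef_deriv /V /strunc coef_poly.
  case: ifP => mN; last by rewrite mul0rn eqxx.
  move=> cm0.
  have vm0 : v m.+1 != 0 by apply: contraNneq cm0 => ->; rewrite mul0rn.
  have nm0 : (m.+1)%:R != 0 :> 'F_p.
    by apply: contraNneq cm0 => h; rewrite -mulr_natr h mulr0.
  have [_ [_ Sv3]] := Sv.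
  have [_ /orP [m0p|m1p]] := Sv3 m.+1 m0 vm0.
    by move: nm0; rewrite (natFp pr) (eqP m0p) eqxx.
  have mm := ar10 p2 m1p.
  have pje : (p * j <= m.+1)%N.
    rewrite leqNgt; apply/negP => h; move: vm0; rewrite vlow //.
    by rewrite eqSS eqn0Ngt m0.
  pose e := (m %/ p)%N.
  have me : (m : nat) = (p * e)%N by rewrite {1}(divn_eq m p) mm addn0 mulnC.
  have je : (j <= e)%N by apply: (ar8 p2); rewrite -me addn1.
  rewrite me !exprM.
  apply: dX_le (ar1 p2 j1 ij je) _.
  apply: subXX_dX.
  - rewrite -frobB // UZ addrC addKr mulnC; apply: dX_exp.
    rewrite -mul_polyC; apply: dvdp_mull.
    by have := dX_exp (p * i).+1 XZ1; rewrite mul1n.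
  - by have := dX_exp p XA1; rewrite mul1n.
  - by have := dX_exp p XZ1; rewrite mul1n.
have hb : 'X^N %| (U^`() \Po Z) - (U^`() \Po Y) - c%:P * 'X^(N.-1).
  have UY : U \Po Y = Y + ui *: Y ^+ (p * i).+1.
    by rewrite UE comp_polyD comp_polyX comp_polyZ comp_Xn_poly.
  have XY1 : 'X^1 %| Y by rewrite expr1.
  have YX : 'X^2 %| Y - 'X.
    rewrite (I1 _ _ (ui *: Y ^+ (p * i).+1)) -UY.
    apply: dvdp_sub; first by apply: dX_le H2; rewrite ltnS.
    rewrite -mul_polyC; apply: dvdp_mull.
    by apply: (dX_le (n := 1 * (p * i).+1)); [rewrite mul1n ltnS | apply: dX_exp].
  have pj2 : (2 <= p * j)%N := leq_trans p2 (leq_pmulr p j1).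
  have pjN : (p * j <= N)%N.
    rewrite hN; apply: leq_trans (leqnSn _); apply: leq_trans (leq_pmull _ (prime_gt0 pr)).
    by rewrite -addnBA // leq_addr.
  pose vc := vpj%:P.
  have VX : 'X^((p * j).+1) %| V - 'X - vc * 'X^(p * j).
    apply: coef_dX => k kpj.
    have kN : (k < N.+1)%N by rewrite ltnS; apply: leq_trans pjN; rewrite -ltnS.
    rewrite !coefB coefX coefCM coefXn /V /strunc coef_poly kN.
    move: kpj; rewrite ltnS leq_eqVlt => /orP [/eqP ->|kpj].
      rewrite vpjE eqxx mulr1.
      have -> : (p * j == 1)%N = false by apply: negbTE; rewrite neq_ltn pj2 orbT.
      by rewrite subr0 subrr.
    rewrite vlow // subrr.
    have -> : (k == p * j)%N = false by apply: negbTE; rewrite neq_ltn kpj.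
    by rewrite mulr0 subrr.
  have V2X : 'X^2 %| V - 'X.
    rewrite (IV2 _ _ vc ('X^(p * j))); apply: dvdp_add.
      by apply: dX_le VX; rewrite ltnS ltnW.
    by apply: dvdp_mull; apply: dvdp_exp2l.
  have ZX : 'X^2 %| Z - 'X.
    rewrite (I2 _ _ Y (V \Po Z)); apply: dvdp_sub; first apply: dvdp_add => //.
      by apply: dX_le H1'; rewrite ltnS.
    have -> : (V \Po Z) - Z = (V - 'X) \Po Z by rewrite comp_polyB comp_polyX.
    exact: comp_dX1 XZ V2X.
  pose G := Z - Y + vc * 'X^(p * j).
  have GX : 'X^((p * j).+1) %| G.
    rewrite /G (IG _ _ _ _ (V \Po Z) (Z ^+ (p * j))).
    apply: dvdp_sub; first apply: dvdp_sub.
    - by apply: dX_le H1'; rewrite ltnS.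
    - have -> : (V \Po Z) - Z - vc * Z ^+ (p * j) = (V - 'X - vc * 'X^(p * j)) \Po Z.
        by rewrite !comp_polyB comp_polyX comp_polyM comp_polyC comp_Xn_poly.
      exact: comp_dX1 XZ VX.
    - apply: dvdp_mull.
      have -> : ((p * j).+1 = 2 + 1 * (p * j).-1)%N by rewrite mul1n add2n prednK // ltnW.
      apply: subXX_dX; [exact: ZX | exact: XZ1 | by rewrite expr1 dvdpp].
  have Fr : Z ^+ p - Y ^+ p = G ^+ p - vc * 'X^(p * j * p).
    rewrite -frobB // (_ : Z - Y = G - vc * 'X^(p * j)); last by rewrite /G addrK.
    by rewrite frobB // exprMn /vc fermatC // -exprM.
  pose S := \sum_(k < i) (Z ^+ p) ^+ (i.-1 - k) * (Y ^+ p) ^+ k.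
  pose ic : {poly 'F_p} := i%:R.
  have XZp : 'X^p %| Z ^+ p by have := dX_exp p XZ1; rewrite mul1n.
  have XYp : 'X^p %| Y ^+ p by have := dX_exp p XY1; rewrite mul1n.
  have ZXp : 'X^(2 * p) %| Z ^+ p - 'X^p by rewrite -frobB //; apply: dX_exp.
  have YXp : 'X^(2 * p) %| Y ^+ p - 'X^p by rewrite -frobB //; apply: dX_exp.
  have SX : 'X^(p * i) %| S - ic * 'X^(p * i.-1).
    have -> : ic * 'X^(p * i.-1) = \sum_(k < i) 'X^(p * i.-1).
      by rewrite sumr_const card_ord /ic mulr_natl.
    rewrite -sumrB; apply: dX_sum => k.
    have kk : ((i.-1 - k) + k = i.-1)%N by rewrite subnK // -ltnS prednK.
    rewrite (_ : 'X^(p * i.-1) = ('X^p) ^+ (i.-1 - k) * ('X^p) ^+ k); last by rewrite -exprD kk exprM.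
    rewrite IS; apply: dvdp_add.
      apply: dX_le (ar3 p kk i1) _; apply: dX_mul; last exact: dX_exp.
      by apply: subXX_dX.
    apply: dX_le (ar4 p kk i1) _; apply: dX_mul; first by apply: dX_exp; exact: dvdpp.
    by apply: subXX_dX => //; exact: dvdpp.
  have SX0 : 'X^(p * i.-1) %| S.
    rewrite -(subrK (ic * 'X^(p * i.-1)) S); apply: dvdp_add; last exact: dvdp_mull.
    by apply: dX_le SX; rewrite leq_mul2l leq_pred orbT.
  have K : 'X^N %| Z ^+ (p * i) - Y ^+ (p * i) + (ic * vc) * ('X^(p * j * p) * 'X^(p * i.-1)).
    rewrite (exprM Z p i) (exprM Y p i) subrXX -/S Fr IK.
    apply: dvdp_sub.
      apply: dX_le (ar6 j (prime_gt0 pr) i1) _; apply: dX_mul => //; exact: dX_exp.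
    apply: dX_le (ar7 j (prime_gt0 pr) i1) _; rewrite -mulrA; apply: dvdp_mull.
    by apply: dX_mul => //; exact: dvdpp.
  have e1 : U^`() \Po Z = 1 + ui%:P * Z ^+ (p * i).
    by rewrite ud comp_polyD (comp_poly_multiplicative Z).2 comp_polyZ comp_Xn_poly mul_polyC.
  have e2 : U^`() \Po Y = 1 + ui%:P * Y ^+ (p * i).
    by rewrite ud comp_polyD (comp_poly_multiplicative Y).2 comp_polyZ comp_Xn_poly mul_polyC.
  rewrite e1 e2 /c rmorphN !rmorphM /= polyC_natr -/ic -/vc.
  rewrite Ihb; apply: dvdp_mull.
  have eN := ar5 p i1 j1; rewrite /= in eN.
  by rewrite eN exprD.
have B0 : (V^`() \Po Z)`_0 = 1.
  rewrite -horner_coef0 horner_comp horner_coef0.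
  move: XZ; rewrite dX0 => /eqP ->; rewrite horner_coef0 coef_deriv /V /strunc coef_poly.
  by case: Sv => _ [-> _].
have E0 : (U^`() \Po Y)`_0 = 1.
  rewrite -horner_coef0 horner_comp horner_coef0.
  move: XY; rewrite dX0 => /eqP ->; rewrite horner_coef0 coef_deriv UE coefD coefX coefZ coefXn.
  have -> : (1 == (p * i).+1)%N = false by rewrite eqSS eq_sym; apply: negbTE; rewrite -lt0n.
  by rewrite mulr0 addr0.
have key : 'X^N %| W^`() - 1 - c%:P * 'X^(N.-1).
  apply: (@cancel_unit _ _ ((V^`() \Po Z) * (U^`() \Po Y))).
    by rewrite coef0M B0 E0 mulr1 oner_neq0.
  set A := V^`() \Po (U \Po Z). set B := V^`() \Po Z.
  set C := U^`() \Po Z. set E := U^`() \Po Y.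
  have XE : 'X^(N.-1 + 1) %| c%:P * 'X^(N.-1) * B * (1 - E).
    apply: dX_mul; first by apply: dvdp_mulr; apply: dvdp_mull; exact: dvdpp.
    by rewrite expr1 dX0 coefB coef1 E0 subrr.
  rewrite addn1 prednK // in XE.
  have e := assembly_id A B C E (W^`()) (Z^`()) (Y^`()) (c%:P * 'X^(N.-1)).
  rewrite e.
  by rewrite !dvdp_add // ?dvdp_mull.
have Wd : forall k, (0 < k)%N -> (k <= N)%N -> (k %% p == 1)%N -> (W^`())`_(k.-1) = alpha k.
  move=> k k0 kN kp.
  by rewrite coef_deriv prednK // /W /strunc coef_poly ltnS kN -mulr_natr (natFp pr) (eqP kp) mulr1.
have cf : forall m, (m < N)%N -> (W^`())`_m = (m == 0)%:R + c * (m == N.-1)%:R.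
  move=> m mN; have := dX_coef key mN.
  rewrite !coefB coef1 coefCM coefXn => /eqP; rewrite subr_eq0 subr_eq => /eqP ->.
  by rewrite addrC.
have Np : (N %% p == 1)%N by rewrite hN -addn1 mulnC modnMDl modn_small.
split.
  move=> k k2 kN kp.
  have k0 : (0 < k)%N by apply: leq_trans k2.
  rewrite -(Wd k k0 (ltnW kN) kp) cf; last exact: leq_ltn_trans (leq_pred k) kN.
  have -> : (k.-1 == 0)%N = false by case: k k2 {kN kp k0} => [|[|k]].
  have -> : (k.-1 == N.-1)%N = false.
    apply: negbTE; rewrite -(inj_eq succn_inj) !prednK //.
    by rewrite neq_ltn kN.
  by rewrite mulr0 addr0.
rewrite -Wd // cf ?prednK // eqxx mulr1.
have -> : (N.-1 == 0)%N = false.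
  rewrite hN /=; apply: negbTE; rewrite -lt0n muln_gt0 (prime_gt0 pr) /=.
  by rewrite addnC -addnBA // ltn_addr.
by rewrite add0r.
Qed.
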